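(* For every integer $k\ge 1$, $$\sum_{n=k}^\infty \frac{B_{n,k}}{4^n}=1,\qquad \sum_{n=k}^\infty B_{n,k}\frac{(-1)^n}{4^n}=(2\sqrt2-3)^k,$$ $$\sum_{n=k}^\infty \frac{A_{n,k+1}}{4^n}=2,\qquad \sum_{n=k}^\infty A_{n,k+1}\frac{(-1)^n}{4^n}=2(\sqrt2-1)(2\sqrt2-3)^k,$$ and moreover $$\sum_{k\ge1}\sum_{n\ge k} \frac{B_{n,k}}{4^{n+k}}=\frac13,\qquad \sum_{k\ge1}\sum_{n\ge k} B_{n,k}\frac{(-1)^n}{4^{n+k}}=\frac{8\sqrt2-13}{41},$$ $$\sum_{k\ge0}\sum_{n\ge k} \frac{A_{n,k+1}}{4^{n+k}}=\frac83,\qquad \sum_{k\ge0}\sum_{n\ge k} A_{n,k+1}\frac{(-1)^n}{4^{n+k}}=\frac{8}{41}(5\sqrt2-3).$$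
   Context: The Catalan triangle numbers are $B_{n,k}=\frac{k}{n}\binom{2n}{n-k}$ for integers $n\ge1$, $1\le k\le n$, and $A_{n,k}=\frac{2k-1}{2n+1}\binom{2n+1}{n+1-k}$ for integers $n\ge 0$, $1\le k\le n+1$. *)

(* Defs.v *)
From HB Require Import structures.
From mathcomp Require Import all_boot all_order all_algebra.
From mathcomp Require Import all_classical all_reals topology normedtype sequences.
Set Implicit Arguments. Unset Strict Implicit. Unset Printing Implicit Defensive.
Import Order.TTheory GRing.Theory Num.Theory numFieldTopology.Exports numFieldNormedType.Exports.
Local Open Scope ring_scope.

(* Catalan triangle B_{n,k} = k/n * C(2n, n-k)   (used for 1 <= k <= n) *)
Definition catalanB (R : realType) (n k : nat) : R :=
  (k%:R / n%:R) * ('C(2 * n, n - k))%:R.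

(* Catalan triangle A_{n,k} = (2k-1)/(2n+1) * C(2n+1, n+1-k)  (used for 1 <= k <= n+1) *)
Definition catalanA (R : realType) (n k : nat) : R :=
  ((2 * k - 1)%:R / (2 * n + 1)%:R) * ('C(2 * n + 1, n.+1 - k))%:R.

Definition psum (R : realType) (m : nat) (u : nat -> R) (N : nat) : R :=
  \sum_(m <= n < N) u n.

Definition tsum (R : realType) (m : nat) (u : nat -> R) : R :=
  lim (psum m u @ \oo)%classic.

Arguments catalanB R n k : clear implicits.
Arguments catalanA R n k : clear implicits.

(* Main.v *)
Require Import Defs.
From HB Require Import structures.
From mathcomp Require Import all_boot all_order all_algebra.
From mathcomp Require Import all_classical all_reals topology normedtype sequences.
From mathcomp Require Import ring lra zify.
Import Order.TTheory GRing.Theory Num.Theory numFieldTopology.Exports numFieldNormedType.Exports.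
Local Open Scope classical_set_scope.
Local Open Scope ring_scope.

Section Comb.
Variable R : realType.

Definition g (n k : nat) : R :=
  if n is n'.+1 then ('C((2*n').+1, n'+k)%:R - 'C((2*n').+1, (n'+k).+1)%:R)
  else (k == 0%N)%:R.
Arguments g n k : simpl never.

Lemma g_rec n k : g n.+1 k.+1 = g n k + 2 * g n k.+1 + g n k.+2.
Proof.
case: n => [|n].
  rewrite /g /= !add0n; case: k => [|k].
    have -> : 'C((2 * 0).+1, 1) = 1%N by [].
    have -> : 'C((2 * 0).+1, 2) = 0%N by [].
    rewrite /=; ring.
  by rewrite !bin_small //=; ring.
rewrite /g.
have -> : (2 * n.+1).+1 = ((2*n).+1).+2 by lia.
have -> : (n.+1 + k.+1 = (n+k).+2)%N by lia.
have -> : (n + k.+1 = (n+k).+1)%N by lia.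
have -> : (n + k.+2 = (n+k).+2)%N by lia.
rewrite !binS !natrD; ring.
Qed.

Lemma g_0 n : g n 0%N = (n == 0%N)%:R.
Proof.
case: n => [|n]; rewrite /g //=; rewrite addn0.
have h : 'C((2*n).+1, n.+1) = 'C((2*n).+1, n).
  by rewrite -[in RHS]bin_sub; [congr 'C(_,_); lia | lia].
by rewrite h subrr.
Qed.

Lemma g_lt n k : (n < k)%N -> g n k = 0.
Proof.
case: n => [|n] h; rewrite /g /=; first by case: k h.
by rewrite !bin_small ?subrr //; lia.
Qed.

Lemma g_B n k : (1 <= k <= n)%N -> catalanB R n k = g n k.
Proof.
case: n => [|n] /= h; first lia.
rewrite /catalanB.
have e1 := mul_bin_diag (2 * n.+1) (n + k).
have e2 := mul_bin_down (2 * n.+1) (n + k).+1.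
have e3 : 'C(2 * n.+1, n.+1 - k) = 'C(2 * n.+1, (n+k).+1).
  by rewrite -[in RHS]bin_sub; [congr 'C(_,_); lia | lia].
move: e1 e2; have -> : (2 * n.+1).-1 = (2*n).+1 by lia.
rewrite e3 /g.
set X := 'C((2*n).+1, n+k); set Y := 'C((2*n).+1, (n+k).+1); set C := 'C(2*n.+1, (n+k).+1).
move=> e1 e2.
have e4 : (n.+1 * X = n.+1 * Y + k * C)%N.
  have : (2 * (n.+1 * X) = 2 * (n.+1 * Y + k * C))%N.
    have : ((2 * n.+1 - (n + k).+1) = n.+1 - k)%N by lia.
    move=> e5; rewrite e5 in e2.
    have hk : (k <= n.+1)%N by lia.
    nia.
  lia.
have : (n.+1%:R * X%:R = n.+1%:R * Y%:R + k%:R * C%:R :> R).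
  by rewrite -!natrM -natrD e4.
move=> e6.
have hn : (n.+1%:R : R) != 0 by rewrite pnatr_eq0.
apply: (mulfI hn); rewrite mulrBr e6 mulrA mulrCA divff //; ring.
Qed.

Lemma g_A n k : (k <= n)%N -> catalanA R n k.+1 = g n k + g n k.+1.
Proof.
rewrite /catalanA; case: n => [|n] h.
  have -> : k = 0%N by lia.
  rewrite /= (_ : 'C(2 * 0 + 1, 1 - 1) = 1%N) // divr1 mulr1 addr0.
  by rewrite (_ : (2 * 1 - 1)%N = 1%N).
rewrite /g.
have -> : (n + k.+1 = (n+k).+1)%N by lia.
set M := (2 * n.+1 + 1)%N.
have hM1 : (M.-1 = (2*n).+2)%N by rewrite /M; lia.
have hM2 : ((2*n).+2.-1 = (2*n).+1)%N by lia.
have e1 := mul_bin_diag M (n.+1 + k).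
have e2 := mul_bin_diag (2*n).+2 (n + k).
have e3 := mul_bin_down M (n.+1 + k).+1.
have e4 := mul_bin_down (2*n).+2 (n.+1 + k).+1.
have e5 : 'C(M, n.+2 - k.+1) = 'C(M, (n.+1+k).+1).
  by rewrite -[in RHS]bin_sub; [congr 'C(_,_); rewrite /M; lia | rewrite /M; lia].
rewrite hM1 in e1 e3; rewrite hM2 in e2 e4.
move: e1 e2 e3 e4; rewrite e5.
have -> : (n.+1 + k = (n+k).+1)%N by lia.
set X := 'C((2*n).+1, n+k); set Y := 'C((2*n).+1, (n+k).+1);
set Z := 'C((2*n).+1, (n+k).+1.+1); set C := 'C(M, (n+k).+1.+1);
set C1 := 'C((2*n).+2, (n+k).+1); set C2 := 'C((2*n).+2, (n+k).+2).
have -> : (M - (n + k).+2 = n.+1 - k)%N by rewrite /M; lia.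
have -> : ((2*n).+2 - (n + k).+2 = n - k)%N by lia.
move=> e1 e2 e3 e4.
have e6 : (M * (2*n).+2 * X = M * (2*n).+2 * Z + (2*n).+2 * (2*k).+1 * C)%N.
  have f1 : (M * (2*n).+2 * X = (n+k).+1 * (n+k).+2 * C)%N.
    by rewrite -mulnA e2 mulnCA e1; ring.
  have f2 : (M * (2*n).+2 * Z = (n-k) * (n.+1 - k) * C)%N.
    by rewrite -mulnA e4 mulnCA e3; ring.
  rewrite f1 f2.
  move: h; clear; move=> h.
  case: (ltnP n k) => hk.
    have -> : k = n.+1 by lia.
    rewrite subnn; have -> : (n - n.+1 = 0)%N by lia.
    ring.
  have -> : (n.+1 - k = (n - k).+1)%N by lia.
  have [j ->] : exists j, n = (k + j)%N by exists (n - k)%N; lia.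
  have -> : (k + j - k = j)%N by lia.
  ring.
have e7 : (M * X = M * Z + (2*k).+1 * C)%N.
  apply/eqP; rewrite -(eqn_pmul2l (_ : 0 < (2*n).+2)%N) //; apply/eqP.
  rewrite mulnDr !mulnA [((2*n).+2 * M)%N]mulnC e6; ring.
have e8 : (M%:R * X%:R = M%:R * Z%:R + (2*k).+1%:R * C%:R :> R).
  by rewrite -!natrM -natrD e7.
have -> : (2 * k.+1 - 1 = (2*k).+1)%N by lia.
have hn : (M%:R : R) != 0 by rewrite pnatr_eq0 /M; lia.
apply: (mulfI hn).
rewrite mulrA mulrCA divff // mulr1.
rewrite (_ : _ * (_ - _ + _) = M%:R * X%:R - M%:R * Z%:R); last ring.
rewrite e8; ring.
Qed.

Lemma g_ge0 n k : 0 <= g n k.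
Proof.
case: k => [|k]; first by rewrite g_0 ler0n.
case: (ltnP n k.+1) => h; first by rewrite g_lt.
rewrite -g_B ?h // /catalanB; apply: mulr_ge0 => //; apply: divr_ge0 => //.
Qed.

Definition cc (n : nat) : R := 'C(2 * n, n)%:R * (1/4) ^+ n.

Lemma g_tele n : g n.+1 1%N * (1/4) ^+ n.+1 = 2 * (cc n.+1 - cc n.+2).
Proof.
rewrite -g_B // /catalanB /cc.
have f1 := mul_bin_left (2 * n.+1) n.
have f2 := mul_bin_diag (2 * n.+2) n.+1.
have f3 := mul_bin_down (2 * n.+2).-1 n.+1.
have -> : (n.+1 - 1 = n)%N by lia.
rewrite (_ : ((2 * n.+2).-1.-1 = 2 * n.+1)%N) in f3; last by lia.
rewrite (_ : ((2 * n.+2).-1 - n.+1 = n.+2)%N) in f3; last by lia.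
rewrite (_ : (2 * n.+1 - n = n.+2)%N) in f1; last by lia.
set D := 'C(2 * n.+1, n.+1) in f1 f3 *.
set C0 := 'C(2 * n.+1, n) in f1 *.
set C3 := 'C((2 * n.+2).-1, n.+1) in f2 f3.
set C4 := 'C(2 * n.+2, n.+2) in f2 *.
have E1 : (C0%:R : R) = n.+1%:R * D%:R / n.+2%:R.
  apply: (mulfI (_ : n.+2%:R != 0 :> R)); first by rewrite pnatr_eq0.
  rewrite mulrCA divff ?pnatr_eq0 // mulr1 -!natrM; congr _%:R; lia.
have E2 : (C4%:R : R) = 2 * (2 * n.+1).+1%:R * D%:R / n.+2%:R.
  apply: (mulfI (_ : n.+2%:R != 0 :> R)); first by rewrite pnatr_eq0.
  apply: (mulfI (_ : n.+2%:R != 0 :> R)); first by rewrite pnatr_eq0.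
  rewrite [X in _ = n.+2%:R * X]mulrCA divff ?pnatr_eq0 // mulr1 -!natrM.
  congr _%:R.
  rewrite (_ : ((2 * n.+2).-1 = (2 * n.+1).+1)%N) in f3; last by lia.
  nia.

rewrite E1 E2 !exprS; field.
have h1 : (0 : R) <= n%:R by [].
by apply/andP; split; apply/negP => /eqP; lra.
Qed.
End Comb.

Section Ana.
Variable R : realType.
Local Notation g := (g R).
Local Notation cc := (cc R).


Definition Pg k (x : R) N := \sum_(n < N) g n k * x ^+ n.

Lemma Pg_rec k x N : x != 0 ->
  Pg k.+2 x N = Pg k.+1 x N.+1 / x - Pg k x N - 2 * Pg k.+1 x N.
Proof.
move=> hx.
have e : Pg k.+1 x N.+1 = x * (Pg k x N + 2 * Pg k.+1 x N + Pg k.+2 x N).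
  rewrite /Pg big_ord_recl g_lt // mul0r add0r.
  rewrite mulr_sumr -!big_split mulr_sumr; apply: eq_bigr => i _.
  by rewrite g_rec exprS /=; ring.
by rewrite e; field.
Qed.

Lemma Pg_rec_cvg k x (a b : R) : x != 0 -> Pg k x @ \oo --> a -> Pg k.+1 x @ \oo --> b ->
  Pg k.+2 x @ \oo --> b / x - a - 2 * b.
Proof.
move=> hx ha hb.
have hb' : (fun N => Pg k.+1 x N.+1) @ \oo --> b by rewrite cvg_shiftS.
have -> : Pg k.+2 x = (fun N => Pg k.+1 x N.+1 / x - Pg k x N - 2 * Pg k.+1 x N).
  by apply: funext => N; rewrite Pg_rec.
apply: cvgB; last by apply: cvgMl_tmp.
apply: cvgB; last exact: ha.
by apply: cvgMr_tmp.
Qed.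

Lemma Pg0 x : Pg 0%N x @ \oo --> (1:R).
Proof.
rewrite -cvg_shiftS.
have -> : (fun N => Pg 0%N x N.+1) = fun=> 1.
  apply: funext => N; rewrite /Pg big_ord_recl big1 ?addr0.
    by rewrite (g_0 R) expr0 mulr1.
  by move=> i _; rewrite (g_0 R) mul0r.
apply: cvg_cst.
Qed.

Lemma cc_ratio n : cc n.+1 = cc n * ((2 * n).+1%:R / (2 * n).+2%:R).
Proof.
rewrite /cc.
have f1 := mul_bin_diag (2 * n.+1) n.
have f2 := mul_bin_down (2 * n).+1 n.
rewrite (_ : ((2 * n.+1).-1 = (2 * n).+1)%N) in f1; last by lia.
rewrite (_ : ((2 * n).+1.-1 = (2 * n))%N) in f2; last by lia.
rewrite (_ : ((2 * n).+1 - n = n.+1)%N) in f2; last by lia.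
have f3 : (n.+1 * 'C(2 * n.+1, n.+1) = 2 * (2 * n).+1 * 'C(2 * n, n))%N.
  apply/eqP; rewrite -(eqn_pmul2l (_ : 0 < n.+1)%N) //; apply/eqP.
  rewrite -f1.
  have -> : (n.+1 * (2 * (2 * n).+1 * 'C(2 * n, n)) = 2 * n.+1 * ((2 * n).+1 * 'C(2 * n, n)))%N by ring.
  by rewrite f2; ring.
have E : ('C(2 * n.+1, n.+1)%:R : R) = 2 * (2 * n).+1%:R * 'C(2 * n, n)%:R / n.+1%:R.
  apply: (mulfI (_ : n.+1%:R != 0 :> R)); first by rewrite pnatr_eq0.
  rewrite mulrCA divff ?pnatr_eq0 // mulr1 -!natrM f3 !natrM //.
rewrite E exprS.
have h1 : (0 : R) <= n%:R by [].
rewrite (_ : (2 * n).+2%:R = 2 * n.+1%:R :> R); last by rewrite -natrM; congr _%:R; lia.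
field.
by apply/negP => /eqP; lra.
Qed.

Lemma cc_ge0 n : 0 <= cc n.
Proof. by rewrite /cc mulr_ge0 // exprn_ge0 // divr_ge0. Qed.

Lemma cc_sq n : cc n ^+ 2 * (2 * n).+1%:R <= 1.
Proof.
elim: n => [|n IH].
  by rewrite /cc /= expr0 mulr1 bin0 expr1n mul1r muln0.
rewrite cc_ratio.
set c := cc n in IH *.
have h1 : (0 : R) <= n%:R by [].
rewrite (_ : (2 * n.+1).+1%:R = 2 * n%:R + 3 :> R); last first.
  ring.
rewrite (_ : (2 * n).+1%:R = 2 * n%:R + 1 :> R) in IH *; last first.
  ring.
rewrite (_ : (2 * n).+2%:R = 2 * n%:R + 2 :> R); last first.
  ring.
set m := n%:R in h1 *.
have hm : 0 < 2 * m + 2 by lra.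
rewrite (_ : (c * ((2 * m + 1) / (2 * m + 2))) ^+ 2 * (2 * m + 3) =
   c ^+ 2 * (2 * m + 1) ^+ 2 * (2 * m + 3) / (2 * m + 2) ^+ 2); last first.
  by field; apply/negP => /eqP; lra.
rewrite ler_pdivrMr ?exprn_gt0 // mul1r.
have hc : 0 <= c ^+ 2 by rewrite sqr_ge0.
have key : 0 <= (1 - c ^+ 2 * (2 * m + 1)) * ((2 * m + 1) * (2 * m + 3)).
  by apply: mulr_ge0; [rewrite subr_ge0 | nra].
nra.
Qed.

Lemma cc_cvg0 : cc @ \oo --> (0 : R).
Proof.
apply/cvgrPdist_lt => e e0.
have := @cvg_harmonic R; move/cvgrPdist_lt => /(_ (e * e) (mulr_gt0 e0 e0)).
apply: filterS => N hN.
rewrite sub0r normrN ger0_norm ?cc_ge0 //.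
move: hN; rewrite sub0r normrN ger0_norm ?harmonic_ge0 // /harmonic /=.
move=> hN.
have h1 : (0 : R) <= N%:R by [].
have hs := cc_sq N.
have hc := cc_ge0 N.
rewrite (_ : (2 * N).+1%:R = 2 * N%:R + 1 :> R) in hs; last first.
  ring.
rewrite (_ : N.+1%:R = N%:R + 1 :> R) in hN; last by ring.
set m := N%:R in h1 hs hN.
have hh : (m + 1)^-1 * (m + 1) = 1 by rewrite mulVf //; apply/negP => /eqP; lra.
have hp : 0 < (m + 1)^-1 by rewrite invr_gt0; lra.
set h := (m + 1)^-1 in hh hN hp.
have : cc N ^+ 2 <= h.
  have : cc N ^+ 2 * (m + 1) <= 1 by nra.
  move=> H1; nra.
nra.
Qed.

Lemma Pg1q : Pg 1%N (1/4) @ \oo --> (1:R).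
Proof.
rewrite -cvg_shiftS.
have -> : (fun N => Pg 1%N (1/4) N.+1) = (fun N => 1 - 2 * cc N.+1).
  apply: funext => N; rewrite /Pg big_ord_recl g_lt // mul0r add0r.
  under eq_bigr do rewrite g_tele.
  rewrite -mulr_sumr -(big_mkord xpredT (fun i => cc i.+1 - cc i.+2)).
  rewrite (telescope_sumr_eq (fun k => - cc k.+1)) //; last by move=> k _; ring.
  have -> : cc 1%N = 1/2.
    by rewrite /cc (_ : 'C(2 * 1, 1) = 2%N) // expr1; lra.
  lra.
have h2 : (fun N => cc N.+1) @ \oo --> (0:R) by rewrite cvg_shiftS; exact: cc_cvg0.
have : (fun N => 1 - 2 * cc N.+1) @ \oo --> (1 - 2 * 0 : R).
  apply: cvgB; first exact: cvg_cst.
  by apply: cvgMl_tmp.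
by rewrite mulr0 subr0.
Qed.

Lemma Pq k : Pg k (1/4) @ \oo --> (1:R).
Proof.
suff : Pg k (1/4) @ \oo --> (1:R) /\ Pg k.+1 (1/4) @ \oo --> (1:R) by case.
elim: k => [|k [h1 h2]]; first by split; [exact: Pg0 | exact: Pg1q].
split => //.
have h4 : (1/4 : R) != 0 by apply/negP => /eqP; lra.
have := Pg_rec_cvg _ _ _ _ h4 h1 h2.
have -> : (1:R) / (1/4) - 1 - 2 * 1 = 1 by rewrite div1r invrK; lra.
by [].
Qed.

Lemma Pg_series k x : Pg k x = series (fun n => g n k * x ^+ n).
Proof. by apply: funext => N; rewrite /series /= big_mkord. Qed.

Lemma Pq_ge0 k N : 0 <= Pg k (1/4) N.
Proof.
rewrite /Pg; apply: sumr_ge0 => i _.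
by apply: mulr_ge0; [exact: g_ge0 | apply: exprn_ge0; lra].
Qed.

Lemma Pq_le1 k N : Pg k (1/4) N <= 1.
Proof.
have hc : cvgn (Pg k (1/4)) by apply: cvgP; exact: Pq.
have := nondecreasing_cvgn_le _ hc N.
rewrite (cvg_lim _ (Pq k)) //; apply.
move=> a b hab; rewrite !Pg_series /series /=.
apply: (nondecreasing_series (P := xpredT)) => // n _ _.
by apply: mulr_ge0; [exact: g_ge0 | apply: exprn_ge0; lra].
Qed.

Lemma Pm_norm k N : `| Pg k (-1/4) N | <= Pg k (1/4) N.
Proof.
apply: le_trans (ler_norm_sum _ _ _) _.
apply: ler_sum => i _.
rewrite normrM ger0_norm ?g_ge0 // normrX mulNr normrN ger0_norm //; lra.
Qed.

Lemma Pm_cvg k : cvgn (Pg k (-1/4)).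
Proof.
rewrite Pg_series; apply: normed_cvg.
have -> : [normed series (fun n => g n k * (-1/4) ^+ n)] = Pg k (1/4).
  apply: funext => N; rewrite Pg_series /series /=; apply: eq_bigr => i _.
  by rewrite normrM ger0_norm ?g_ge0 // normrX mulNr normrN ger0_norm //; lra.
by apply: cvgP; exact: Pq.
Qed.

Lemma rec_bounded (L : nat -> R) (u : R) : u ^+ 2 + 6 * u + 1 = 0 -> `|u| <= 1/2 ->
  L 0%N = 1 -> (forall k, L k.+2 = -6 * L k.+1 - L k) -> (forall k, `|L k| <= 1) ->
  forall k, L k = u ^+ k.
Proof.
move=> hu hu2 h0 hr hb.
pose D k := L k.+1 - u * L k.
have hD : forall k, D k = u * D k.+1.
  move=> k; rewrite /D hr; apply: subr0_eq.
  rewrite (_ : _ - _ = L k.+1 * (u ^+ 2 + 6 * u + 1)); first by rewrite hu mulr0.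
  ring.
have hDj : forall j k, D k = u ^+ j * D (k + j)%N.
  elim=> [|j IH] k; first by rewrite expr0 mul1r addn0.
  by rewrite IH hD exprS mulrA [u ^+ j * u]mulrC addnS.
have hDb : forall k, `|D k| <= 2.
  move=> k; apply: le_trans (ler_normB _ _) _; rewrite normrM.
  have := hb k.+1; have := hb k; have := normr_ge0 u; have := normr_ge0 (L k).
  move=> *; nra.
have hD0 : forall k, D k = 0.
  move=> k; apply/normr0_eq0/eqP; rewrite eq_le normr_ge0 andbT.
  have hg : `|1/2 : R| < 1 by rewrite ger0_norm; lra.
  apply: (ler_cvg_to (cvg_cst `|D k|) (cvg_geometric 2 hg)).
  apply: nearW => j /=.
  rewrite (hDj j k) normrM normrX.
  have := hDb (k + j)%N; have := normr_ge0 (D (k + j)%N).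
  have : `|u| ^+ j <= (1/2) ^+ j by apply: lerXn2r => //; [rewrite nnegrE | rewrite nnegrE; lra].
  have : 0 <= `|u| ^+ j by apply: exprn_ge0.
  move=> *; nra.
elim=> [|k IH]; first by rewrite h0 expr0.
have := hD0 k; rewrite /D IH exprS => /subr0_eq ->; ring.
Qed.

Definition Lm k := limn (Pg k (-1/4)).

Lemma Lm_cvg k : Pg k (-1/4) @ \oo --> Lm k.
Proof. exact: Pm_cvg. Qed.

Lemma Lm_rec k : Lm k.+2 = -6 * Lm k.+1 - Lm k.
Proof.
have h4 : (-1/4 : R) != 0 by apply/negP => /eqP; lra.
have := Pg_rec_cvg _ _ _ _ h4 (Lm_cvg k) (Lm_cvg k.+1).
move/(cvg_lim _); rewrite -/(Lm _) => -> //.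
rewrite mulNr divrN div1r invrK; ring.
Qed.

Lemma Lm0 : Lm 0%N = 1.
Proof. by rewrite /Lm (cvg_lim _ (Pg0 _)). Qed.

Lemma Lm_bound k : `|Lm k| <= 1.
Proof.
rewrite ler_norml; apply/andP; split.
  apply: limr_ge; first exact: Pm_cvg.
  apply: nearW => N /=.
  have := Pm_norm k N; have := Pq_le1 k N; rewrite ler_norml => h1 /andP [h2 h3].
  lra.
apply: limr_le; first exact: Pm_cvg.
apply: nearW => N /=.
have := Pm_norm k N; have := Pq_le1 k N; rewrite ler_norml => h1 /andP [h2 h3].
lra.
Qed.

Definition uu : R := 2 * Num.sqrt 2 - 3.

Lemma sqrt2_facts : Num.sqrt (2:R) ^+ 2 = 2 /\ 0 <= Num.sqrt (2:R).
Proof. by split; [rewrite sqr_sqrtr // | exact: sqrtr_ge0]. Qed.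

Lemma Lm_val k : Lm k = uu ^+ k.
Proof.
apply: rec_bounded; [| |exact: Lm0|exact: Lm_rec|exact: Lm_bound].
  rewrite /uu; have [h1 h2] := sqrt2_facts; nra.
rewrite /uu ler_norml; have [h1 h2] := sqrt2_facts.
apply/andP; split; nra.
Qed.

Lemma Pm k : Pg k (-1/4) @ \oo --> uu ^+ k.
Proof. by rewrite -Lm_val; exact: Lm_cvg. Qed.

Lemma psum_eq k (f h : nat -> R) : (forall n, (n < k)%N -> h n = 0) ->
  (forall n, (k <= n)%N -> f n = h n) -> psum k f = fun N => \sum_(n < N) h n.
Proof.
move=> h0 hf; apply: funext => N; rewrite /psum -(big_mkord xpredT h).
case: (leqP k N) => hkN.
  rewrite [RHS](big_cat_nat (leq0n k) hkN) /= [X in _ = X + _]big1_seq ?add0r.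
    by apply: eq_big_nat => n /andP [hn _]; exact: hf.
  by move=> n; rewrite mem_index_iota => /andP [_ /andP [_ hn]]; exact: h0.
rewrite [LHS]big_geq ?(ltnW hkN) //; symmetry; apply: big1_seq.
move=> n; rewrite mem_index_iota => /andP [_ /andP [_ hn]]; apply: h0.
exact: ltn_trans hn hkN.
Qed.

Lemma LB x k : (1 <= k)%N -> psum k (fun n => catalanB R n k * x ^+ n) = Pg k x.
Proof.
move=> hk; rewrite (psum_eq _ _ (fun n => g n k * x ^+ n)) //.
  by move=> n hn; rewrite g_lt // mul0r.
by move=> n hn; rewrite g_B // hk hn.
Qed.

Lemma LA x k : psum k (fun n => catalanA R n k.+1 * x ^+ n) =
  fun N => Pg k x N + Pg k.+1 x N.
Proof.
rewrite (psum_eq _ _ (fun n => g n k * x ^+ n + g n k.+1 * x ^+ n)).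
- by apply: funext => N; rewrite /Pg big_split.
- by move=> n hn; rewrite !g_lt ?mul0r ?addr0 //; exact: ltnW.
- by move=> n hn; rewrite g_A // mulrDl.
Qed.

Lemma psum_ext m (F G : nat -> R) : (forall k, (m <= k)%N -> F k = G k) -> psum m F = psum m G.
Proof.
move=> h; apply: funext => N; rewrite /psum; apply: eq_big_nat => i /andP [hi _].
exact: h.
Qed.

Lemma tsum_scale k (f : nat -> R) (c l : R) : psum k f @ \oo --> l ->
  tsum k (fun n => f n * c) = l * c.
Proof.
move=> hf; rewrite /tsum.
have -> : psum k (fun n => f n * c) = fun N => psum k f N * c.
  by apply: funext => N; rewrite /psum mulr_suml.
apply: cvg_lim => //.
by apply: cvgMr_tmp.
Qed.

Lemma G0 (a z : R) : `|z| < 1 -> psum 0%N (fun k => a * z ^+ k) @ \oo --> a / (1 - z).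
Proof.
move=> hz; have := cvg_geometric_series (a := a) hz.
have -> : series (geometric a z) = psum 0%N (fun k => a * z ^+ k).
  by apply: funext => N; rewrite /psum /series /=.
by [].
Qed.

Lemma G1 (a z : R) : `|z| < 1 -> psum 1%N (fun k => a * z ^+ k) @ \oo --> a / (1 - z) - a.
Proof.
move=> hz; rewrite -cvg_shiftS.
have h := cvg_geometric_series (a := a) hz.
rewrite -cvg_shiftS in h.
have -> : (fun N => psum 1%N (fun k => a * z ^+ k) N.+1) =
          (fun N => series (geometric a z) N.+1 - a).
  apply: funext => N; rewrite /psum /series /= [in RHS]big_ltn // expr0 mulr1.
  by rewrite addrC addKr.
apply: cvgB => //; exact: cvg_cst.
Qed.
End Ana.

Theorem lemma2p2 (R : realType) :
  (forall k : nat, (1 <= k)%N ->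
     [/\ psum k (fun n => catalanB R n k / 4 ^+ n) @ \oo --> (1 : R),
         psum k (fun n => catalanB R n k * ((-1) ^+ n / 4 ^+ n)) @ \oo
           --> ((2 * Num.sqrt 2 - 3) ^+ k : R),
         psum k (fun n => catalanA R n k.+1 / 4 ^+ n) @ \oo --> (2 : R) &
         psum k (fun n => catalanA R n k.+1 * ((-1) ^+ n / 4 ^+ n)) @ \oo
           --> (2 * (Num.sqrt 2 - 1) * (2 * Num.sqrt 2 - 3) ^+ k : R)]) /\
  [/\ psum 1 (fun k => tsum k (fun n => catalanB R n k / 4 ^+ (n + k))) @ \oo
        --> (3^-1 : R),
      psum 1 (fun k => tsum k (fun n => catalanB R n k * ((-1) ^+ n / 4 ^+ (n + k))))
        @ \oo --> ((8 * Num.sqrt 2 - 13) / 41 : R),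
      psum 0 (fun k => tsum k (fun n => catalanA R n k.+1 / 4 ^+ (n + k))) @ \oo
        --> (8 / 3 : R) &
      psum 0 (fun k => tsum k (fun n => catalanA R n k.+1 * ((-1) ^+ n / 4 ^+ (n + k))))
        @ \oo --> (8 / 41 * (5 * Num.sqrt 2 - 3) : R)].
Proof.
have d1 : forall (c : R) n, c / 4 ^+ n = c * (1/4) ^+ n.
  by move=> c n; rewrite expr_div_n expr1n mul1r.
have d2 : forall (c : R) n, c * ((-1) ^+ n / 4 ^+ n) = c * (-1/4) ^+ n.
  by move=> c n; rewrite expr_div_n.
have d3 : forall (c : R) n k, c / 4 ^+ (n + k) = c * (1/4) ^+ n * (1/4) ^+ k.
  by move=> c n k; rewrite d1 exprD mulrA.
have d4 : forall (c : R) n k, c * ((-1) ^+ n / 4 ^+ (n + k)) = c * (-1/4) ^+ n * (1/4) ^+ k.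
  move=> c n k; rewrite -mulrA; congr (_ * _).
  by rewrite exprD invfM mulrA !expr_div_n expr1n mul1r.
have [hs1 hs2] := sqrt2_facts R.
have hB1 : forall k, (1 <= k)%N -> psum k (fun n => catalanB R n k * (1/4) ^+ n) @ \oo --> (1:R).
  by move=> k hk; rewrite LB //; exact: Pq.
have hB2 : forall k, (1 <= k)%N -> psum k (fun n => catalanB R n k * (-1/4) ^+ n) @ \oo --> uu R ^+ k.
  by move=> k hk; rewrite LB //; exact: Pm.
have hA1 : forall k, psum k (fun n => catalanA R n k.+1 * (1/4) ^+ n) @ \oo --> (2:R).
  move=> k; rewrite LA.
  have : (fun N => Pg R k (1/4) N + Pg R k.+1 (1/4) N) @ \oo --> (1 + 1 : R).
    by apply: cvgD; exact: Pq.
  by have -> : (1:R) + 1 = 2 by lra.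
have hA2 : forall k, psum k (fun n => catalanA R n k.+1 * (-1/4) ^+ n) @ \oo -->
    2 * (Num.sqrt 2 - 1) * uu R ^+ k.
  move=> k; rewrite LA.
  have : (fun N => Pg R k (-1/4) N + Pg R k.+1 (-1/4) N) @ \oo --> uu R ^+ k + uu R ^+ k.+1.
    by apply: cvgD; exact: Pm.
  have -> // : uu R ^+ k + uu R ^+ k.+1 = 2 * (Num.sqrt 2 - 1) * uu R ^+ k.
  by rewrite exprS /uu; ring.
split.
  move=> k hk; split.
  - rewrite (_ : (fun n => _) = (fun n => catalanB R n k * (1/4) ^+ n)); first exact: hB1.
    by apply: funext => n; rewrite d1.
  - rewrite (_ : (fun n => _) = (fun n => catalanB R n k * (-1/4) ^+ n)); first exact: hB2.
    by apply: funext => n; rewrite d2.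
  - rewrite (_ : (fun n => _) = (fun n => catalanA R n k.+1 * (1/4) ^+ n)); first exact: hA1.
    by apply: funext => n; rewrite d1.
  - rewrite (_ : (fun n => _) = (fun n => catalanA R n k.+1 * (-1/4) ^+ n)); first exact: hA2.
    by apply: funext => n; rewrite d2.
have hq : `|1/4 : R| < 1 by rewrite ger0_norm; lra.
have hu : `|uu R * (1/4)| < 1.
  rewrite normrM (ger0_norm (_ : 0 <= 1/4)); last by lra.
  have : `|uu R| <= 1/2.
    by rewrite /uu ler_norml; apply/andP; split; nra.
  move=> h; have := normr_ge0 (uu R); nra.
have hz : 1 - uu R * (1/4) != 0.
  apply/negP => /eqP h; move: hu; rewrite (_ : uu R * (1/4) = 1); last by lra.
  by rewrite normr1 ltxx.
split.
- rewrite (@psum_ext R _ _ (fun k => 1 * (1/4) ^+ k)).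
    have := @G1 R 1 _ hq; by rewrite (_ : (1:R) / (1 - 1/4) - 1 = 3^-1) //; field.
  move=> k hk; rewrite (_ : (fun n => _) = (fun n => catalanB R n k * (1/4) ^+ n * (1/4) ^+ k)).
    by rewrite (@tsum_scale R _ _ _ _ (hB1 k hk)).
  by apply: funext => n; rewrite d3.
- rewrite (@psum_ext R _ _ (fun k => 1 * (uu R * (1/4)) ^+ k)).
    have := @G1 R 1 _ hu.
    rewrite (_ : (1:R) / (1 - uu R * (1/4)) - 1 = (8 * Num.sqrt 2 - 13) / 41) //.
    apply: (mulfI hz); set a := 1 - uu R * (1/4); rewrite mulrBr mulr1 div1r mulfV //; rewrite /a.
    rewrite /uu; nra.
  move=> k hk; rewrite (_ : (fun n => _) = (fun n => catalanB R n k * (-1/4) ^+ n * (1/4) ^+ k)).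
    by rewrite (@tsum_scale R _ _ _ _ (hB2 k hk)) [RHS]mul1r [RHS]exprMn.
  by apply: funext => n; rewrite d4.
- rewrite (@psum_ext R _ _ (fun k => 2 * (1/4) ^+ k)).
    have := @G0 R 2 _ hq; by rewrite (_ : (2:R) / (1 - 1/4) = 8 / 3) //; field.
  move=> k hk; rewrite (_ : (fun n => _) = (fun n => catalanA R n k.+1 * (1/4) ^+ n * (1/4) ^+ k)).
    by rewrite (@tsum_scale R _ _ _ _ (hA1 k)).
  by apply: funext => n; rewrite d3.
- rewrite (@psum_ext R _ _ (fun k => (2 * (Num.sqrt 2 - 1)) * (uu R * (1/4)) ^+ k)).
    have := @G0 R (2 * (Num.sqrt 2 - 1)) _ hu.
    rewrite (_ : 2 * (Num.sqrt 2 - 1) / (1 - uu R * (1/4)) = 8 / 41 * (5 * Num.sqrt 2 - 3)) //.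
    apply: (mulfI hz); rewrite mulrCA mulfV // mulr1.
    rewrite /uu; nra.
  move=> k hk; rewrite (_ : (fun n => _) = (fun n => catalanA R n k.+1 * (-1/4) ^+ n * (1/4) ^+ k)).
    by rewrite (@tsum_scale R _ _ _ _ (hA2 k)) [in RHS]exprMn mulrA.
  by apply: funext => n; rewrite d4.
Qed.
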